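(* Let $\mathcal F$ be a family of nonempty subsets of $[r]$ whose building closure $\widehat{\mathcal F}$ contains $[r]$. Then the normal fan of $\Delta_{\widehat{\mathcal F}}$ is a simplicial fan refining the normal fan of $\Delta_{\mathcal F}$ (every cone of the former is contained in a cone of the latter, and both fans have support $\mathbb R^r$); i.e. it is a triangulation of the normal fan of $\Delta_{\mathcal F}$.
   Context: For $F\subseteq[r]$ nonempty, $\Delta_F=\operatorname{conv}\{e_i:i\in F\}\subseteq\mathbb R^r$, and for a family $\mathcal F$, $\Delta_{\mathcal F}=\sum_{F\in\mathcal F}\Delta_F$ (Minkowski sum). The building closure $\widehat{\mathcal F}$ is the smallest family of subsets of $[r]$ containing $\mathcal F$ and all singletons such that $F\cup F'\in\widehat{\mathcal F}$ whenever $F,F'\in\widehat{\mathcal F}$ and $F\cap F'\ne\emptyset$. Normal fans are considered modulo the common lineality line $\mathbb R(1,\dots,1)$. *)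

(* Defs.v *)
From HB Require Import structures.
From mathcomp Require Import all_boot all_order all_algebra.
From mathcomp Require Import reals.
Set Implicit Arguments. Unset Strict Implicit. Unset Printing Implicit Defensive.
Import Order.TTheory GRing.Theory Num.Theory.
Local Open Scope ring_scope.

Section Defs.
Variables (R : realType) (r : nat).

Definition dotv (u v : 'rV[R]_r) : R := \sum_(i < r) u 0 i * v 0 i.

Definition ebasis (i : 'I_r) : 'rV[R]_r := delta_mx 0 i.

Definition Delta (F : {set 'I_r}) : 'rV[R]_r -> Prop :=
  fun x => exists lam : 'I_r -> R,
    (forall i, i \in F -> 0 <= lam i) /\ \sum_(i in F) lam i = 1 /\
    x = \sum_(i in F) lam i *: ebasis i.

Definition DeltaFam (FF : {set {set 'I_r}}) : 'rV[R]_r -> Prop :=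
  fun x => exists p : {set 'I_r} -> 'rV[R]_r,
    (forall F, F \in FF -> Delta F (p F)) /\ x = \sum_(F in FF) p F.

Definition building_closed (G : {set {set 'I_r}}) : bool :=
  [forall i : 'I_r, [set i] \in G] &&
  [forall A in G, forall B in G, (A :&: B != set0) ==> (A :|: B \in G)].

Definition building_closure (FF : {set {set 'I_r}}) : {set {set 'I_r}} :=
  \bigcap_(G : {set {set 'I_r}} | (FF \subset G) && building_closed G) G.

Definition face (P : 'rV[R]_r -> Prop) (w : 'rV[R]_r) : 'rV[R]_r -> Prop :=
  fun x => P x /\ forall y, P y -> dotv w y <= dotv w x.

Definition normal_cone (P : 'rV[R]_r -> Prop) (G : 'rV[R]_r -> Prop)
  : 'rV[R]_r -> Prop :=
  fun w => forall x, G x -> face P w x.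

(* the cones of the normal fan of P are the normal_cone P (face P w0) for
   w0 with a nonempty face *)
Definition nonempty_face (P : 'rV[R]_r -> Prop) (w0 : 'rV[R]_r) : Prop :=
  exists x, face P w0 x.

Definition all_ones : 'rV[R]_r := const_mx 1.

(* C is a simplicial cone modulo the lineality line R(1,...,1):
   C = R(1,..,1) + cone(v_1..v_k) with v_1,..,v_k,(1,..,1) linearly independent *)
Definition simplicial_mod_ones (C : 'rV[R]_r -> Prop) : Prop :=
  exists (k : nat) (v : 'I_k -> 'rV[R]_r),
    (forall (c : 'I_k -> R) (d : R),
        \sum_(j < k) c j *: v j + d *: all_ones = 0 ->
        (forall j, c j = 0) /\ d = 0) /\
    (forall w, C w <->
       exists (t : R) (lam : 'I_k -> R),
         (forall j, 0 <= lam j) /\ w = t *: all_ones + \sum_(j < k) lam j *: v j).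

Definition normal_fan_simplicial (P : 'rV[R]_r -> Prop) : Prop :=
  forall w0, nonempty_face P w0 -> simplicial_mod_ones (normal_cone P (face P w0)).

Definition normal_fan_refines (P Q : 'rV[R]_r -> Prop) : Prop :=
  forall w0, nonempty_face P w0 ->
    exists w1, nonempty_face Q w1 /\
      forall w, normal_cone P (face P w0) w -> normal_cone Q (face Q w1) w.

Definition normal_fan_complete (P : 'rV[R]_r -> Prop) : Prop :=
  forall w, exists w0, nonempty_face P w0 /\ normal_cone P (face P w0) w.

End Defs.

(* Main.v *)
Require Import Defs.
From HB Require Import structures.
From mathcomp Require Import all_boot all_order all_algebra.
From mathcomp Require Import reals.
From mathcomp Require Import zify ring lra.
Import Order.TTheory GRing.Theory Num.Theory.
Local Open Scope ring_scope.

Module Aux.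
Set Implicit Arguments. Unset Strict Implicit. Unset Printing Implicit Defensive.

Section A.
Variables (R : realType) (r : nat).
Implicit Types (v w : 'rV[R]_r) (B S T U : {set 'I_r}).

Lemma dotv_sum (I : finType) (P : pred I) w (f : I -> 'rV[R]_r) :
  dotv w (\sum_(x | P x) f x) = \sum_(x | P x) dotv w (f x).
Proof.
rewrite /dotv; under eq_bigr do rewrite summxE big_distrr.
exact: exchange_big.
Qed.

Lemma dotvZ w a v : dotv w (a *: v) = a * dotv w v.
Proof. by rewrite /dotv mulr_sumr; apply: eq_bigr => i _; rewrite mxE mulrCA. Qed.

Lemma dotv_e w i : dotv w (ebasis R i) = w 0 i.
Proof.
rewrite /dotv (bigD1 i) //= big1 ?addr0.
  by rewrite /ebasis mxE !eqxx /= mulr1.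
by move=> j /negbTE ji; rewrite /ebasis mxE ji andbF mulr0.
Qed.

Lemma dotv_Delta w B p lam :
  p = \sum_(i in B) lam i *: ebasis R i ->
  dotv w p = \sum_(i in B) lam i * w 0 i.
Proof.
by move=> ->; rewrite dotv_sum; apply: eq_bigr => i _; rewrite dotvZ dotv_e.
Qed.

Definition amax v B i := i \in B /\ forall j, j \in B -> v 0 j <= v 0 i.
Definition amaxb v B i := (i \in B) && [forall j in B, v 0 j <= v 0 i].

Lemma amaxbP v B i : reflect (amax v B i) (amaxb v B i).
Proof.
apply: (iffP andP) => [[iB /forall_inP H]|[iB H]]; split => //.
by apply/forall_inP.
Qed.

Lemma amax_exists v B : B != set0 -> exists i, amax v B i.
Proof.
move=> /set0Pn [i0 i0B].
have [i [iB Hi]] : exists i, i \in B /\ forall j, j \in B -> v 0 j <= v 0 i.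

  case: (arg_maxP (fun i => v 0 i) i0B) => i iB H.
  by exists i; split=> // j jB; apply: H.
by exists i.
Qed.

Lemma amax_eq v B i j : amax v B i -> amax v B j -> v 0 i = v 0 j.
Proof. by move=> [iB Hi] [jB Hj]; apply/le_anti; rewrite Hi ?Hj. Qed.

Definition ea v B : 'rV[R]_r :=
  if [pick i | amaxb v B i] is Some i then ebasis R i else 0.

Lemma eaP v B : B != set0 -> exists i, amax v B i /\ ea v B = ebasis R i.
Proof.
move=> /(amax_exists v) [i0 Hi0]; rewrite /ea.
case: pickP => [i /amaxbP Hi | /(_ i0)]; first by exists i.
by move/amaxbP: Hi0 => ->.
Qed.

Lemma Delta_e B i : i \in B -> Delta B (ebasis R i).
Proof.
move=> iB; exists (fun k => (k == i)%:R); split; first by move=> k _; rewrite ler0n.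
split.
  rewrite (bigD1 i) //= eqxx big1 ?addr0 // => k /andP[_ /negbTE ->] //.
rewrite (bigD1 i) //= eqxx scale1r big1 ?addr0 // => k /andP[_ /negbTE ->].
by rewrite scale0r.
Qed.

Lemma Delta_le v B p i : Delta B p -> amax v B i -> dotv v p <= v 0 i.
Proof.
move=> [lam [l0 [l1 ->]]] [iB Hi].
rewrite (dotv_Delta v (erefl _)).
have -> : v 0 i = \sum_(k in B) lam k * v 0 i by rewrite -mulr_suml l1 mul1r.
by apply: ler_sum => k kB; apply: ler_wpM2l; [apply: l0 | apply: Hi].
Qed.

Section Fam.
Variable G : {set {set 'I_r}}.
Hypothesis Gne : forall B, B \in G -> B != set0.
Let P := @DeltaFam R r G.

Lemma DeltaFam_q (q : {set 'I_r} -> 'rV[R]_r) :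
  (forall B, B \in G -> exists i, i \in B /\ q B = ebasis R i) ->
  P (\sum_(B in G) q B).
Proof.
move=> H; exists q; split => // B BG.
by have [i [iB ->]] := H B BG; apply: Delta_e.
Qed.

Lemma DeltaFam_upper v (q : {set 'I_r} -> 'rV[R]_r) y :
  (forall B, B \in G -> exists i, amax v B i /\ q B = ebasis R i) ->
  P y -> dotv v y <= dotv v (\sum_(B in G) q B).
Proof.
move=> H [p [pD ->]]; rewrite !dotv_sum; apply: ler_sum => B BG.
have [i [Hi ->]] := H B BG; rewrite dotv_e; exact: Delta_le (pD B BG) Hi.
Qed.

Definition xv v := \sum_(B in G) ea v B.

Lemma xv_face v : face P v (xv v).
Proof.
split.
  apply: DeltaFam_q => B BG; have [i [[iB _] ->]] := eaP v (Gne BG).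
  by exists i.
by move=> y Py; apply: DeltaFam_upper => // B BG; apply: eaP; apply: Gne.
Qed.

Lemma nonempty_face_all v : nonempty_face P v.
Proof. by exists (xv v); apply: xv_face. Qed.

Definition Ccone w0 w := forall B, B \in G -> forall i,
  amax w0 B i -> amax w B i.

Lemma cone_C w0 w : normal_cone P (face P w0) w -> Ccone w0 w.
Proof.
move=> Hw B BG i Hi; split; first by case: Hi.
move=> j jB.
pose q (k : 'I_r) := fun B' => if B' == B then ebasis R k else ea w0 B'.
have Hx : face P w0 (\sum_(B' in G) q i B').
  split.
    apply: DeltaFam_q => B' B'G; rewrite /q; case: eqP => [->|_].
      by exists i; split => //; case: Hi.
    by have [k [[kB _] ->]] := eaP w0 (Gne B'G); exists k.
  move=> y Py; apply: DeltaFam_upper => // B' B'G; rewrite /q.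
  by case: eqP => [->|_]; [exists i | apply: eaP; apply: Gne].
have [_ Hmax] := Hw _ Hx.
have Pj : P (\sum_(B' in G) q j B').
  apply: DeltaFam_q => B' B'G; rewrite /q; case: eqP => [->|_].
    by exists j.
  by have [k [[kB _] ->]] := eaP w0 (Gne B'G); exists k.
have := Hmax _ Pj.
rewrite !dotv_sum (bigD1 B) //= [X in _ <= X](bigD1 B) //= /q eqxx !dotv_e.
set s1 := \sum_(_ | _) _; set s2 := \sum_(_ | _) _.
have -> : s1 = s2 by apply: eq_bigr => B' /andP[_ /negbTE ->].
by rewrite lerD2r.
Qed.

Lemma sum_le_eq (I : finType) (A : pred I) (f g : I -> R) :
  (forall i, A i -> f i <= g i) -> \sum_(i | A i) g i <= \sum_(i | A i) f i ->
  forall i, A i -> f i = g i.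
Proof.
move=> Hfg Hs i Ai.
have H0 : \sum_(i | A i) (g i - f i) = 0.
  apply/le_anti; apply/andP; split; first by rewrite sumrB subr_le0.
  by rewrite sumr_ge0 // => k Ak; rewrite subr_ge0 Hfg.
apply/eqP; rewrite eq_sym -subr_eq0; apply/eqP.
by apply: (psumr_eq0P _ H0) => // k Ak; rewrite subr_ge0 Hfg.
Qed.

Lemma Delta_eq w0 w B p i0 i1 :
  Delta B p -> amax w0 B i0 -> dotv w0 p = w0 0 i0 ->
  (forall i, amax w0 B i -> amax w B i) -> amax w B i1 ->
  dotv w p = w 0 i1.
Proof.
move=> [lam [l0 [l1 Hp]]] Hi0 Hd HC Hi1.
rewrite (dotv_Delta w Hp); rewrite (dotv_Delta w0 Hp) in Hd.
have H1 : forall k, k \in B -> lam k * w0 0 k = lam k * w0 0 i0.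
  apply: sum_le_eq.
    by move=> k kB; apply: ler_wpM2l; [apply: l0 | case: Hi0 => _; apply].
  by rewrite Hd -mulr_suml l1 mul1r.
have -> : \sum_(k in B) lam k * w 0 k = \sum_(k in B) lam k * w 0 i1.
  apply: eq_bigr => k kB; have := H1 k kB.
  have [->|lk] := eqVneq (lam k) 0; first by rewrite !mul0r.
  move/(mulfI lk) => ek; congr (_ * _).
  apply: (amax_eq (HC k _)) => //; split => // j jB.
  by rewrite ek; case: Hi0 => _; apply.
by rewrite -mulr_suml l1 mul1r.
Qed.

Lemma C_cone w0 w : Ccone w0 w -> normal_cone P (face P w0) w.
Proof.
move=> HC x [Px Hx]; split => // y Py.
apply: (le_trans (DeltaFam_upper (q := ea w) _ Py)).
  by move=> B BG; apply: eaP; apply: Gne.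
move: Px Hx => [p [pD ->]] Hx.
have Hle := Hx _ (proj1 (xv_face w0)).
rewrite /xv !dotv_sum in Hle *.
have Heq := sum_le_eq (A := fun B => B \in G) (f := fun B => dotv w0 (p B))
   (g := fun B => dotv w0 (ea w0 B)).
rewrite le_eqVlt; apply/orP; left; apply/eqP.
apply: eq_bigr => B BG.
have [i0 [Hi0 e0]] := eaP w0 (Gne BG).
have [i1 [Hi1 e1]] := eaP w (Gne BG).
rewrite e1 dotv_e; apply/esym; apply: (Delta_eq (pD B BG) Hi0) => //.
  rewrite Heq //; first by rewrite e0 dotv_e.
  by move=> B' B'G; have [k [Hk ->]] := eaP w0 (Gne B'G); rewrite dotv_e;
    apply: Delta_le (pD B' B'G) Hk.
by move=> i; apply: HC.
Qed.

Lemma cone_iff w0 w : normal_cone P (face P w0) w <-> Ccone w0 w.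
Proof. by split; [apply: cone_C | apply: C_cone]. Qed.

End Fam.
End A.

Section B.
Variables (R : realType) (r : nat).
Implicit Types (v w : 'rV[R]_r) (B S T U : {set 'I_r}).
Variable G : {set {set 'I_r}}.
Hypothesis Gne : forall B, B \in G -> B != set0.
Hypothesis GU : forall A B, A \in G -> B \in G -> A :&: B != set0 -> A :|: B \in G.
Hypothesis GT : [set: 'I_r] \in G.
Hypothesis G1 : forall i, [set i] \in G.
Variable w0 : 'rV[R]_r.

Definition good S := (S \in G) && [forall B in G, (S \proper B) ==>
   [exists k in B, [forall j in S, w0 0 j < w0 0 k]]].

Lemma goodG S : good S -> S \in G. Proof. by case/andP. Qed.

Lemma goodP S B : good S -> B \in G -> S \proper B ->
  exists2 k, k \in B & forall j, j \in S -> w0 0 j < w0 0 k.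
Proof.
case/andP => _ /forall_inP H BG SB; have /existsP [k /andP [kB /forall_inP Hk]] :=
  implyP (H B BG) SB.
by exists k.
Qed.

Lemma goodT : good [set: 'I_r].
Proof.
apply/andP; split => //; apply/forall_inP => B _; apply/implyP.
by rewrite properE subsetT andbF.
Qed.

Lemma good_sub S T : good T -> S \in G -> S :&: T != set0 ->
  (forall j, j \in S -> exists2 t, t \in T & w0 0 j <= w0 0 t) -> S \subset T.
Proof.
move=> gT SG ST H.
have UG : S :|: T \in G by apply: GU => //; exact: goodG.
have [TU|nTU] := boolP (T \proper S :|: T).
  have [k kU Hk] := goodP gT UG TU.
  case/setUP: kU => [kS|kT]; last by have := Hk k kT; rewrite ltxx.
  have [t tT le] := H k kS; have := Hk t tT; by rewrite ltNge le.
have : T \subset S :|: T by rewrite subsetUr.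
rewrite subEproper (negbTE nTU) orbF => /eqP TU.
by apply: subset_trans (subsetUl S T) _; rewrite -TU.
Qed.

Lemma good_ne S : good S -> S != set0.
Proof. by move/goodG; apply: Gne. Qed.

Lemma good_lam S T : good S -> good T -> S :&: T != set0 ->
  (S \subset T) || (T \subset S).
Proof.
move=> gS gT ST.
have [a [aS Ha]] := amax_exists w0 (good_ne gS).
have [b [bT Hb]] := amax_exists w0 (good_ne gT).
have [le|lt] := leP (w0 0 a) (w0 0 b).
  apply/orP; left; apply: good_sub => // [|j jS]; first exact: goodG.
  by exists b => //; apply: le_trans le; apply: Ha.
apply/orP; right; apply: good_sub => // [|| j jT]; first exact: goodG.
  by rewrite setIC.
by exists a => //; apply: le_trans (ltW lt); apply: Hb.
Qed.

Lemma good_priv S T i : good S -> good T -> T \proper S -> amax w0 S i -> i \notin T.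
Proof.
move=> gS gT TS [iS Hi]; apply/negP => iT.
have [k kS Hk] := goodP gT (goodG gS) TS.
by have := Hk i iT; rewrite ltNge Hi.
Qed.

Lemma C_add w w' : Ccone G w0 w -> Ccone G w0 w' -> Ccone G w0 (w + w').
Proof.
move=> H H' B BG i Hi; have [iB Hw] := H B BG i Hi; have [_ Hw'] := H' B BG i Hi.
by split => // j jB; rewrite !mxE lerD ?Hw ?Hw'.
Qed.

Lemma C_scale a w : 0 <= a -> Ccone G w0 w -> Ccone G w0 (a *: w).
Proof.
move=> a0 H B BG i Hi; have [iB Hw] := H B BG i Hi.
by split => // j jB; rewrite !mxE ler_wpM2l ?Hw.
Qed.

Lemma C_ones t : Ccone G w0 (t *: all_ones R r).
Proof. by move=> B BG i [iB _]; split => // j jB; rewrite !mxE. Qed.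

Lemma C_zero : Ccone G w0 0.
Proof. by move=> B BG i [iB _]; split => // j jB; rewrite !mxE. Qed.

Definition ind S : 'rV[R]_r := \row_(i < r) (i \in S)%:R.

Lemma C_ind S : good S -> Ccone G w0 (- ind S).
Proof.
move=> gS B BG i [iB Hi]; split => // j jB; rewrite !mxE lerN2.
have [iS|iS] := boolP (i \in S); last by rewrite ler0n.
have [jS|jS] := boolP (j \in S); first by [].
exfalso.
have UG : S :|: B \in G by apply: GU => //; [exact: goodG | apply/set0Pn; exists i; rewrite inE iS].
have SU : S \proper S :|: B.
  rewrite properE subsetUl /=; apply/subsetPn; exists j => //; by rewrite inE jB orbT.
have [k kU Hk] := goodP gS UG SU.
case/setUP: kU => [kS|kB]; first by have := Hk k kS; rewrite ltxx.
by have := Hk i iS; rewrite ltNge Hi.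
Qed.


Definition Nset := [set S | good S & S != [set: 'I_r]].

Definition par S := [arg min_(U < [set: 'I_r] | good U && (S \proper U)) #|U|].

Lemma par_spec S : good S -> S != [set: 'I_r] ->
  [/\ good (par S), S \proper par S &
      forall U, good U -> S \proper U -> par S \subset U].
Proof.
move=> gS ST; rewrite /par; case: arg_minnP.
  by rewrite goodT properT.
move=> P /andP [gP SP] Hmin; split => // U gU SU.
have ne : P :&: U != set0.
  have [a aS] := set0Pn _ (good_ne gS); apply/set0Pn; exists a.
  by rewrite inE (subsetP (proper_sub SP)) ?(subsetP (proper_sub SU)).
case/orP: (good_lam gP gU ne) => // UP.
have := Hmin U; rewrite gU SU => /(_ isT) cP.
have /eqP <- // : P == U by rewrite eq_sym eqEcard UP cP.
Qed.

Variable w : 'rV[R]_r.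
Hypothesis HC : Ccone G w0 w.

Definition valS S := if [pick k | amaxb w0 S k] is Some k then w 0 k else 0.

Lemma valP S i : S \in G -> amax w0 S i -> valS S = w 0 i.
Proof.
move=> SG Hi; rewrite /valS; case: pickP => [k /amaxbP Hk|/(_ i)].
  by apply: amax_eq (HC SG Hk) (HC SG Hi).
by move/amaxbP: Hi => ->.
Qed.

Lemma val_le S T : S \in G -> T \in G -> S \subset T -> valS S <= valS T.
Proof.
move=> SG TG ST.
have [k Hk] := amax_exists w0 (Gne SG); have [k' Hk'] := amax_exists w0 (Gne TG).
rewrite (valP SG Hk) (valP TG Hk').
have [_ H] := HC TG Hk'; apply: H; apply: (subsetP ST); by case: Hk.
Qed.

Lemma tel n S : (r - #|S| <= n)%N -> good S ->
  \sum_(U in Nset | S \subset U) (valS (par U) - valS U) = valS [set: 'I_r] - valS S.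
Proof.
elim: n S => [|n IH] S hn gS.
  have -> : S = [set: 'I_r].
    apply/eqP; rewrite eqEcard subsetT cardsT card_ord; lia.
  rewrite subrr big_pred0 // => U; rewrite inE.
  apply/negbTE; apply/negP => /andP [/andP [_ nU] TU]; move: nU.
  by rewrite eqEsubset subsetT TU.
have [->|nT] := eqVneq S [set: 'I_r].
  rewrite subrr big_pred0 // => U; rewrite inE.
  apply/negbTE; apply/negP => /andP [/andP [_ nU] TU]; move: nU.
  by rewrite eqEsubset subsetT TU.
have [gP SP Hmin] := par_spec gS nT.
have SN : S \in Nset by rewrite inE gS nT.
rewrite (bigD1 S) ?SN ?subxx //=.
rewrite (eq_bigl (fun U => (U \in Nset) && (par S \subset U))).
  rewrite IH //; first by ring.
  have := proper_card SP; have := max_card (mem (par S)); rewrite card_ord; lia.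
move=> U; apply/idP/idP.
  case/andP => /andP [UN SU] nUS; rewrite UN /=.
  apply: Hmin; first by move: UN; rewrite inE => /andP[].
  by rewrite properEneq eq_sym nUS SU.
case/andP => UN PU; rewrite UN /= (subset_trans (proper_sub SP) PU) /=.
apply/eqP => US; move: PU; rewrite US => PS; move: SP; by rewrite properE PS andbF.
Qed.

Lemma cover i : exists T, [/\ good T, i \in T & amax w0 T i].
Proof.
pose Q := fun B => (B \in G) && (i \in B) && [forall j in B, w0 0 j <= w0 0 i].
have Qi : Q [set i].
  rewrite /Q G1 set11 /=; apply/forall_inP => j; rewrite inE => /eqP -> //.
case: (arg_maxnP (fun B => #|B|) Qi) => T /andP [/andP [TG iT] /forall_inP HT] Hmax.
have gT : good T.
  rewrite /good TG /=; apply/forall_inP => B BG; apply/implyP => TB.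
  apply: contraT; rewrite negb_exists => /forallP H; exfalso.
  have : Q B.
    rewrite /Q BG (subsetP (proper_sub TB)) //=; apply/forall_inP => k kB.
    have := H k; rewrite kB /= negb_forall => /existsP [j].
    rewrite negb_imply -leNgt => /andP [jT le].
    by apply: le_trans le (HT j jT).
  move/Hmax; have := proper_card TB; lia.
by exists T; split => //; split => // j jT; apply: HT.
Qed.

Lemma decomp : w = valS [set: 'I_r] *: all_ones R r +
  \sum_(U in Nset) (valS (par U) - valS U) *: - ind U.
Proof.
apply/rowP => i; rewrite !mxE summxE.
have [T [gT iT Hi]] := cover i.
have TN : forall U, U \in Nset -> (i \in U) = (T \subset U).
  move=> U; rewrite inE => /andP [gU _]; apply/idP/idP => [iU|TU].
    have ne : U :&: T != set0 by apply/set0Pn; exists i; rewrite inE iU.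
    case/orP: (good_lam gU gT ne) => // UT.
    have [/eqP -> //|nUT] := boolP (U == T).
    have : U \proper T by rewrite properEneq nUT.
    by move/(good_priv gT gU)/(_ Hi); rewrite iU.
  exact: (subsetP TU).
have -> : \sum_(U in Nset) ((valS (par U) - valS U) *: - ind U) 0 i =
   - \sum_(U in Nset | T \subset U) (valS (par U) - valS U).
  rewrite -sumrN big_mkcondr /=; apply: eq_bigr => U UN.
  rewrite -TN // !mxE; case: (i \in U); rewrite /=; ring.
rewrite (tel (n := r) _ gT); last lia.
rewrite (valP (goodG gT) Hi) mulr1; ring.
Qed.

End B.

Section C.
Variables (R : realType) (r : nat).
Variable G : {set {set 'I_r}}.
Hypothesis Gne : forall B, B \in G -> B != set0.
Hypothesis GU : forall A B, A \in G -> B \in G -> A :&: B != set0 -> A :|: B \in G.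
Hypothesis GT : [set: 'I_r] \in G.
Hypothesis G1 : forall i, [set i] \in G.
Variable w0 : 'rV[R]_r.

Lemma indep k (f : 'I_k -> {set 'I_r}) (finj : injective f)
  (fN : forall j, f j \in Nset G w0) (c : 'I_k -> R) (d : R) :
  \sum_(j < k) c j *: (- ind R (f j)) + d *: all_ones R r = 0 ->
  (forall j, c j = 0) /\ d = 0.
Proof.
move=> H.
have Hp : forall p, - \sum_(j < k) c j * (p \in f j)%:R + d = 0.
  move=> p; have := congr1 (fun M : 'rV[R]_r => M 0 p) H.
  rewrite !mxE summxE mulr1 => E; apply: (etrans _ E); congr (_ + _); rewrite -sumrN.
  by apply: eq_bigr => j _; rewrite !mxE mulrN.
have fg : forall j, good G w0 (f j) /\ f j != [set: 'I_r].
  by move=> j; have := fN j; rewrite inE => /andP.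
have [i0 Hi0] := amax_exists w0 (Gne GT).
have d0 : d = 0.
  have := Hp i0; rewrite big1 ?oppr0 ?add0r // => j _.
  have [gj nj] := fg j.
  have := good_priv (goodT GT w0) gj; rewrite properT => /(_ i0 nj Hi0) /negbTE ->.
  by rewrite mulr0.
split => //.
suff : forall n j, (r - #|f j| <= n)%N -> c j = 0.
  by move=> Hn j; apply: (Hn r); lia.
elim => [|n IH] j hn.
  have [gj nj] := fg j; exfalso; move/negP: nj; apply; rewrite eqEcard subsetT cardsT card_ord.
  lia.
have [gj nj] := fg j.
have [p Hp'] := amax_exists w0 (good_ne Gne gj).
have := Hp p; rewrite d0 addr0 (bigD1 j) //= big1 ?addr0.
  by case: Hp' => -> _; rewrite mulr1 => /eqP; rewrite oppr_eq0 => /eqP.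
move=> j' nj'.
have [pj|pj] := boolP (p \in f j'); last by rewrite mulr0.
have [gj' _] := fg j'.
have ne : f j :&: f j' != set0 by apply/set0Pn; exists p; rewrite inE pj; case: Hp' => ->.
case/orP: (good_lam Gne GU gj gj' ne) => sub.
  have prop : f j \proper f j'.
    rewrite properEneq sub andbT; apply/eqP => e.
    by move: nj'; rewrite (finj _ _ e) eqxx.
  rewrite (IH j') ?mul0r //.
  have := proper_card prop; have := max_card (mem (f j')); rewrite card_ord; lia.
exfalso.
have prop : f j' \proper f j.
  rewrite properEneq sub andbT; apply/eqP => e.
  by move: nj'; rewrite (finj _ _ e) eqxx.
by have := good_priv gj gj' prop Hp'; rewrite pj.
Qed.

Lemma simplicial_C : simplicial_mod_ones (Ccone G w0).
Proof.
exists #|Nset G w0|, (fun j => - ind R (enum_val j)); split.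
  by move=> c d; apply: indep; [apply: enum_val_inj | move=> j; apply: enum_valP].
move=> w; split => [HC|[t [lam [l0 ->]]]].
  exists (valS w0 w [set: 'I_r]).
  exists (fun j => valS w0 w (par G w0 (enum_val j)) - valS w0 w (enum_val j)).
  split.
    move=> j; have := enum_valP j; rewrite inE => /andP [gj nj].
    have [gP SP _] := par_spec Gne GU GT gj nj.
    by rewrite subr_ge0; apply: (val_le Gne HC (goodG gj) (goodG gP) (proper_sub SP)).
  rewrite {1}(decomp Gne GU GT G1 HC); congr (_ + _).
  exact: (big_enum_val (fun U => (valS w0 w (par G w0 U) - valS w0 w U) *: - ind R U)).
apply: C_add; first exact: C_ones.
apply: (big_ind (Ccone G w0)); [exact: C_zero | exact: C_add | move=> j _].
apply: C_scale => //; apply: C_ind => //.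
by have := enum_valP j; rewrite inE => /andP [].
Qed.

End C.

End Aux.
Import Aux.

Lemma simpl_transfer (R : realType) (r : nat) (C1 C2 : 'rV[R]_r -> Prop) :
  (forall w, C1 w <-> C2 w) -> simplicial_mod_ones C1 -> simplicial_mod_ones C2.
Proof.
move=> E [k [v [Hi Hc]]]; exists k, v; split => // w.
by rewrite -E.
Qed.

Section Clo.
Variables (r : nat) (FF : {set {set 'I_r}}).
Let G := building_closure FF.

Lemma clo_sub : forall B, B \in FF -> B \in G.
Proof. by move=> B BF; apply/bigcapP => H /andP [/subsetP sub _]; apply: sub. Qed.

Lemma clo_single i : [set i] \in G.
Proof. by apply/bigcapP => H /andP [_ /andP [/forallP h _]]; apply: h. Qed.

Lemma clo_union A B : A \in G -> B \in G -> A :&: B != set0 -> A :|: B \in G.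
Proof.
move=> /bigcapP HA /bigcapP HB ne; apply/bigcapP => H HH.
have := HH; case/andP => _ /andP [_ /forall_inP h].
by have := h A (HA H HH) => /forall_inP /(_ B (HB H HH)) /implyP; apply.
Qed.

Lemma clo_ne : (forall F, F \in FF -> F != set0) -> forall B, B \in G -> B != set0.
Proof.
move=> hne B /bigcapP /(_ [set B : {set 'I_r} | B != set0]).
rewrite inE; apply; apply/andP; split.
  by apply/subsetP => F FF'; rewrite inE hne.
apply/andP; split.
  by apply/forallP => i; rewrite inE; apply/set0Pn; exists i; rewrite inE.
apply/forall_inP => A; rewrite inE => _; apply/forall_inP => B'; rewrite inE => _.
apply/implyP => /set0Pn [x]; rewrite inE => /andP [xA _].
by rewrite inE; apply/set0Pn; exists x; rewrite inE xA.
Qed.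
End Clo.

Theorem corollary3p15 (R : realType) (r : nat) (FF : {set {set 'I_r}})
  (hne : forall F, F \in FF -> F != set0)
  (hfull : [set: 'I_r] \in building_closure FF) :
  let P := @DeltaFam R r (building_closure FF) in
  let Q := @DeltaFam R r FF in
  normal_fan_simplicial P /\ normal_fan_refines P Q /\
  normal_fan_complete P /\ normal_fan_complete Q.
Proof.
move=> P Q.
have Gne := @clo_ne r FF hne.
split.
  move=> w0 _; apply: (@simpl_transfer R r (Ccone (building_closure FF) w0)).
    by move=> w; rewrite cone_iff.
  apply: simplicial_C => //; [exact: clo_union | exact: clo_single].
split.
  move=> w0 _; exists w0; split; first exact: nonempty_face_all.
  move=> w; rewrite /P /Q !cone_iff // => H B BF; apply: H; exact: clo_sub.
split.
  by move=> w; exists w; split; [exact: nonempty_face_all | move=> x].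
by move=> w; exists w; split; [exact: nonempty_face_all | move=> x].
Qed.
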